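(* Let $A$ be an $n\times n$ irreducible nonnegative matrix with largest eigenvalue $1$ and positive $w$ with $Aw=w$, $A^Tw=w$, and let $L=I-A$. Let $S,T\subseteq[n]$ be disjoint with $U=S\cup T$ nonempty, let $a\in\{0,1\}^{U}$ with $a_i=1$ for $i\in S$ and $a_i=0$ for $i\in T$, and let $q\in\mathbb R^n$ satisfy $q_i=w_ia_i$ for $i\in U$ and $(Lq)_i=0$ for $i\notin U$. Then $0\le q_i\le w_i$ for every $i\in[n]$, and $(Lq)_i\ge0$ for every $i\in S$ and $(Lq)_j\le0$ for every $j\in T$. *)

(* Defs.v *)
From HB Require Import structures.
From mathcomp Require Import all_boot all_order all_algebra.
From mathcomp Require Import complex.
Set Implicit Arguments. Unset Strict Implicit. Unset Printing Implicit Defensive.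
Import Order.TTheory GRing.Theory Num.Theory.
Local Open Scope ring_scope.

Definition nonneg_mx (R : numDomainType) m n (A : 'M[R]_(m, n)) : Prop :=
  forall i j, 0 <= A i j.

(* Irreducibility of a nonnegative square matrix: its directed graph
   (edge i -> j iff A i j > 0) is strongly connected, i.e. for all i, j
   some power of A has a positive (i,j) entry. *)
Definition irreducible_mx (R : numDomainType) n (A : 'M[R]_n) : Prop :=
  forall i j : 'I_n, exists k : nat, 0 < (A ^+ k) i j.

Definition cmx (R : rcfType) n (A : 'M[R]_n) : 'M[R[i]]_n :=
  map_mx (fun x => (x%:C)%C) A.

Definition spectral_radius_one (R : rcfType) n (A : 'M[R]_n) : Prop :=
  eigenvalue (cmx A) 1 /\ forall z : R[i], eigenvalue (cmx A) z -> `|z| <= 1.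

(* Main.v *)
Require Import Defs.
From HB Require Import structures.
From mathcomp Require Import all_boot all_order all_algebra.
From mathcomp Require Import complex.
Import Order.TTheory GRing.Theory Num.Theory.
Local Open Scope ring_scope.

Lemma maxp (R : rcfType) n (A : 'M[R]_n) (w : 'cV[R]_n) (f : 'I_n -> R)
  (U : {set 'I_n}) (c : R) :
  nonneg_mx A -> irreducible_mx A -> (forall i, 0 < w i 0) -> A *m w = w ->
  U != set0 ->
  (forall i, i \notin U -> f i = \sum_j A i j * f j) ->
  (forall i, i \in U -> f i <= c * w i 0) -> forall i, f i <= c * w i 0.
Proof.
move=> A0 Airr wpos Aw /set0Pn [u uU] harm hU.
pose r := fun i => f i / w i 0.
have qr i : f i = r i * w i 0 by rewrite /r divfK // gt_eqF.
have Awi i : \sum_j A i j * w j 0 = w i 0.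
  by have := congr1 (fun M : 'cV[R]_n => M i 0) Aw; rewrite mxE.
case: (@arg_maxP _ _ _ u predT r isT) => m _ rm.
case: (lerP (r m) c) => [hc | hc].
  move=> i; rewrite qr ler_pM2r //; exact: le_trans (rm i isT) hc.
exfalso.
pose X := [set i | r i == r m].
have clos l j : l \in X -> 0 < A l j -> j \in X.
  rewrite inE => /eqP lX Alj.
  have lU : l \notin U.
    apply/negP => lU; have := hU l lU; rewrite qr ler_pM2r // lX.
    by rewrite leNgt hc.
  have E : \sum_k A l k * (r m * w k 0 - f k) = 0.
    rewrite (eq_bigr (fun k => r m * (A l k * w k 0) - A l k * f k)); last first.
      by move=> k _; rewrite mulrBr mulrCA.
    by rewrite sumrB -mulr_sumr Awi -harm // qr lX subrr.
  have H0 : A l j * (r m * w j 0 - f j) = 0.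
    apply: (psumr_eq0P (P := predT) _ E) => // k _.
    rewrite mulr_ge0 // subr_ge0 qr ler_pM2r //; exact: rm.
  move/eqP: H0; rewrite mulf_eq0 (gt_eqF Alj) /= subr_eq0 => /eqP H.
  by rewrite inE /r -H mulfK // gt_eqF.
have pow k i j : i \in X -> j \notin X -> (A ^+ k) i j = 0.
  elim: k i j => [|k IH] i j iX jX.
    rewrite expr0 mxE; case: eqP => // eij; by move: iX; rewrite eij (negbTE jX).
  rewrite exprSr -mulmxE mxE big1 // => l _.
  case: (boolP (l \in X)) => lX; last by rewrite IH // mul0r.
  have := A0 l j; rewrite le_eqVlt => /orP [/eqP <-|/(clos l j lX)]; first by rewrite mulr0.
  by rewrite (negbTE jX).
have mX : m \in X by rewrite inE.
have uX : u \notin X.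
  rewrite inE; apply/negP => /eqP ru.
  have := hU u uU; rewrite qr ler_pM2r // ru; by rewrite leNgt hc.
have [k hk] := Airr m u.
by rewrite pow // ltxx in hk.
Qed.

Theorem lemma5p32 (R : rcfType) (n : nat) (A : 'M[R]_n) (w : 'cV[R]_n)
  (A_nonneg : nonneg_mx A) (A_irr : irreducible_mx A)
  (A_rho : spectral_radius_one A)
  (w_pos : forall i, 0 < w i 0)
  (Aw : A *m w = w) (ATw : A^T *m w = w)
  (S T : {set 'I_n}) (ST_disj : [disjoint S & T]) (U_nonempty : S :|: T != set0)
  (q : 'cV[R]_n)
  (qS : forall i, i \in S -> q i 0 = w i 0 * 1)
  (qT : forall i, i \in T -> q i 0 = w i 0 * 0)
  (Lq0 : forall i, i \notin S :|: T -> ((1%:M - A) *m q) i 0 = 0) :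
  (forall i, 0 <= q i 0 <= w i 0) /\
  (forall i, i \in S -> 0 <= ((1%:M - A) *m q) i 0) /\
  (forall j, j \in T -> ((1%:M - A) *m q) j 0 <= 0).
Proof.
have Awi i : \sum_j A i j * w j 0 = w i 0.
  by have := congr1 (fun M : 'cV[R]_n => M i 0) Aw; rewrite mxE.
have LqE i : ((1%:M - A) *m q) i 0 = q i 0 - \sum_j A i j * q j 0.
  by rewrite mulmxBl mul1mx !mxE.
have harm i : i \notin S :|: T -> q i 0 = \sum_j A i j * q j 0.
  by move=> /Lq0; rewrite LqE => /eqP; rewrite subr_eq0 => /eqP.
have up : forall i, q i 0 <= 1 * w i 0.
  apply: (@maxp R n A w (fun i => q i 0) (S :|: T) 1 A_nonneg A_irr w_pos Aw U_nonempty harm).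
  move=> i; rewrite inE => /orP [/qS -> | /qT ->]; rewrite mul1r ?mulr1 ?mulr0 //.
  exact: ltW.
have lo : forall i, - q i 0 <= 0 * w i 0.
  apply: (@maxp R n A w (fun i => - q i 0) (S :|: T) 0 A_nonneg A_irr w_pos Aw U_nonempty).
    by move=> i /harm ->; rewrite -sumrN; apply: eq_bigr => j _; rewrite mulrN.
  move=> i; rewrite inE => /orP [/qS -> | /qT ->]; rewrite mul0r ?mulr1 ?mulr0 ?oppr0 //.
  by rewrite oppr_le0 ltW.
have bnd i : 0 <= q i 0 <= w i 0.
  by have := up i; have := lo i; rewrite mul0r mul1r oppr_le0 => -> ->.
split=> //; split.
- move=> i /qS qi; rewrite LqE qi mulr1 subr_ge0.
  rewrite -(Awi i).
  apply: ler_sum => j _; apply: ler_wpM2l; first exact: A_nonneg.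
  by case/andP: (bnd j).
- move=> i /qT qi; rewrite LqE qi mulr0 sub0r oppr_le0.
  apply: sumr_ge0 => j _; apply: mulr_ge0; first exact: A_nonneg.
  by case/andP: (bnd j).
Qed.
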